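(* Let $E_1$ and $E_2$ be balanced equations in the unknowns $x_1,x_2,x_3$, and write $t_{jk}=t_{jk}^{E_1,E_2}$. Then there is a polynomial $t\in\mathbb Z[X_1,X_2,X_3]$ with $$(t_{23},t_{31},t_{12})=t\,(X_1-1,X_2-1,X_3-1).$$
   Context: An equation is a pair $E=(u,v)$ of words over $\{x_1,x_2,x_3\}$; it is balanced if $|u|_x=|v|_x$ for every unknown $x$. For $E=(x_{i_1}\cdots x_{i_r},\,x_{j_1}\cdots x_{j_s})$, $S_{E,x_j}=\sum_{a:\,i_a=j}\prod_{t=1}^{a-1}X_{i_t}-\sum_{a:\,j_a=j}\prod_{t=1}^{a-1}X_{j_t}\in\mathbb Z[X_1,X_2,X_3]$ (empty product $=1$), and $t_{jk}^{E,E'}=S_{E,x_j}S_{E',x_k}-S_{E',x_j}S_{E,x_k}$. *)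

(* Defs.v *)
(* Z[X1,X2,X3] is modelled as the iterated polynomial ring
   {poly {poly {poly int}}} (canonically isomorphic). *)
From HB Require Import structures.
From mathcomp Require Import all_boot all_order all_algebra.
Set Implicit Arguments. Unset Strict Implicit. Unset Printing Implicit Defensive.
Import Order.TTheory GRing.Theory Num.Theory.
Local Open Scope ring_scope.

Definition ZX3 : Type := {poly {poly {poly int}}}.

(* the variables: index 0,1,2 : 'I_3 stand for x_1, x_2, x_3 *)
Definition Xvar (i : 'I_3) : ZX3 :=
  match val i with
  | 0%N => ('X%:P)%:P
  | 1%N => 'X%:P
  | _ => 'X
  end.

Definition word := seq 'I_3.
Definition equation := (word * word)%type.

Definition balanced (E : equation) : Prop :=
  forall x : 'I_3, count_mem x E.1 = count_mem x E.2.

Definition Sword (w : word) (j : 'I_3) : ZX3 :=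
  \sum_(a < size w | nth ord0 w a == j)
     \prod_(t < a) Xvar (nth ord0 w t).

Definition S (E : equation) (j : 'I_3) : ZX3 := Sword E.1 j - Sword E.2 j.

Definition tcoef (E E' : equation) (j k : 'I_3) : ZX3 :=
  S E j * S E' k - S E' j * S E k.

Definition i1 : 'I_3 := @Ordinal 3 0 isT.
Definition i2 : 'I_3 := @Ordinal 3 1 isT.
Definition i3 : 'I_3 := @Ordinal 3 2 isT.

(* Main.v *)
Require Import Defs.
From HB Require Import structures.
From mathcomp Require Import all_boot all_order all_algebra.
From mathcomp Require Import ring.
Import GRing.Theory.
Local Open Scope ring_scope.

Lemma telesc (R : comNzRingType) (g : nat -> R) (n : nat) :
  \sum_(a < n) (\prod_(t < a) g t) * (g a - 1) = \prod_(t < n) g t - 1.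
Proof.
elim: n => [|n IH]; first by rewrite !big_ord0 subrr.
rewrite big_ord_recr /= IH [in RHS]big_ord_recr /=.
ring.
Qed.

Lemma word_id (w : word) :
  \sum_(j < 3) Sword w j * (Xvar j - 1) = \prod_(x <- w) Xvar x - 1.
Proof.
rewrite /Sword.
under [LHS]eq_bigr => j _ do rewrite mulr_suml big_mkcond /=.
rewrite exchange_big /=.
rewrite (big_nth ord0) big_mkord -(@telesc _ (fun t => Xvar (nth ord0 w t))).
apply: eq_bigr => a _.
rewrite (bigD1 (nth ord0 w a)) //= eqxx [X in _ + X]big1 ?addr0 //.
by move=> j; rewrite eq_sym => /negbTE ->.
Qed.

Lemma bal_prod (E : equation) : balanced E ->
  \prod_(x <- E.1) Xvar x = \prod_(x <- E.2) Xvar x.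
Proof.
move=> H; apply: perm_big.
rewrite /perm_eq; apply/allP => x _ /=; apply/eqP; exact: H.
Qed.

Lemma sum3 (F : 'I_3 -> ZX3) : \sum_(j < 3) F j = F i1 + F i2 + F i3.
Proof.
rewrite !big_ord_recl big_ord0 addr0 addrA /=.
congr (F _ + F _ + F _); exact: val_inj.
Qed.

Lemma orth (E : equation) : balanced E ->
  S E i1 * (Xvar i1 - 1) + S E i2 * (Xvar i2 - 1) + S E i3 * (Xvar i3 - 1) = 0.
Proof.
move=> H; rewrite -(sum3 (fun j => S E j * (Xvar j - 1))).
have -> : \sum_(j < 3) S E j * (Xvar j - 1) =
   \sum_(j < 3) Sword E.1 j * (Xvar j - 1) - \sum_(j < 3) Sword E.2 j * (Xvar j - 1).
  by rewrite -sumrB; apply: eq_bigr => j _; rewrite /S mulrBl.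
by rewrite !word_id bal_prod // subrr.
Qed.

Lemma key (R : idomainType) (s1 s2 s3 r1 r2 r3 : {poly R}) (b1 b2 : R) :
  b1 != 0 ->
  s1 * b1%:P + s2 * b2%:P + s3 * ('X - 1%:P) = 0 ->
  r1 * b1%:P + r2 * b2%:P + r3 * ('X - 1%:P) = 0 ->
  exists t, [/\ s2 * r3 - r2 * s3 = t * b1%:P,
                s3 * r1 - r3 * s1 = t * b2%:P &
                s1 * r2 - r1 * s2 = t * ('X - 1%:P)].
Proof.
move=> nb1 h h'.
set a3 := 'X - 1%:P.
set c1 := s2 * r3 - r2 * s3; set c2 := s3 * r1 - r3 * s1; set c3 := s1 * r2 - r1 * s2.
have e1 : c3 * b1%:P - c1 * a3 =
  r2 * (s1 * b1%:P + s2 * b2%:P + s3 * a3) - s2 * (r1 * b1%:P + r2 * b2%:P + r3 * a3).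
  by rewrite /c1 /c3; ring.
have e2 : c3 * b2%:P - c2 * a3 =
  s1 * (r1 * b1%:P + r2 * b2%:P + r3 * a3) - r1 * (s1 * b1%:P + s2 * b2%:P + s3 * a3).
  by rewrite /c2 /c3; ring.
rewrite h h' !mulr0 subrr in e1 e2.
move/eqP: e1; rewrite subr_eq0 => /eqP e1.
move/eqP: e2; rewrite subr_eq0 => /eqP e2.
have : root c3 1.
  apply/eqP; have := congr1 (horner^~ 1) e1.
  rewrite !hornerM hornerC /a3 hornerXsubC subrr mulr0 => /eqP.
  by rewrite mulf_eq0 (negbTE nb1) orbF => /eqP.
case/factor_theorem => t ht.
have a3nz : a3 != 0 by rewrite /a3 polyXsubC_eq0.
exists t; split => //.
- apply/eqP; rewrite -(inj_eq (mulIf a3nz)) -e1 ht /a3; apply/eqP; ring.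
- apply/eqP; rewrite -(inj_eq (mulIf a3nz)) -e2 ht /a3; apply/eqP; ring.
Qed.

Theorem corollary4p11 (E1 E2 : equation) :
  balanced E1 -> balanced E2 ->
  exists t : ZX3,
    [/\ tcoef E1 E2 i2 i3 = t * (Xvar i1 - 1),
        tcoef E1 E2 i3 i1 = t * (Xvar i2 - 1) &
        tcoef E1 E2 i1 i2 = t * (Xvar i3 - 1)].
Proof.
move=> B1 B2.
have h := @orth E1 B1; have h' := @orth E2 B2.
rewrite /tcoef.
move: h h'.
have -> : Xvar i1 - 1 = ('X%:P - 1)%:P :> {poly {poly {poly int}}}.
  by rewrite /= polyCB.
have -> : Xvar i2 - 1 = ('X - 1)%:P :> {poly {poly {poly int}}}.
  by rewrite /= polyCB.
have -> : Xvar i3 - 1 = 'X - 1%:P :> {poly {poly {poly int}}} by [].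
move=> h h'; apply: key.
- rewrite subr_eq0 -polyC1 (inj_eq polyC_inj); apply/eqP => e; have := congr1 (fun p : {poly int} => size p) e; rewrite /= size_polyX size_poly1 //.
- exact h.
- exact h'.
Qed.
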